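(* Let $\mathfrak g_0=\mathfrak{sl}(2n,\mathbb R)$, $n\ge2$. A $\Delta^+(\mathfrak k,\mathfrak t_f)$-dominant weight $\mu=(a_1,\dots,a_n)$ (so $a_1\ge\cdots\ge a_{n-1}\ge|a_n|$, with all $a_i\in\mathbb Z$ or all $a_i\in\mathbb Z+\tfrac12$) lies in $R(\Delta(\mathfrak p,\mathfrak t_f))$ if and only if $$a_1+\cdots+a_k\le 2nk-k^2+k\ \ (1\le k\le n)\quad\text{and}\quad a_1+\cdots+a_{n-1}-a_n\le n^2+n.$$ In particular every such $\mu$ with $a_1\le n+1$ is u-small.
   Context: Here $\mathfrak k=\mathfrak{so}(2n,\mathbb C)$ and $i\mathfrak t_{f,0}^*$ has coordinates with respect to an orthogonal basis $e_1,\dots,e_n$ (of equal lengths); $\Delta^+(\mathfrak k,\mathfrak t_f)=\{e_i\pm e_j:1\le i<j\le n\}$ and $\Delta(\mathfrak p,\mathfrak t_f)=\{\pm(e_i\pm e_j):i<j\}\cup\{\pm2e_i\}$. $R(\Delta(\mathfrak p,\mathfrak t_f))=\{\sum_{\alpha\in\Delta(\mathfrak p,\mathfrak t_f)}b_\alpha\alpha:0\le b_\alpha\le1\}$, and $\mu$ is called u-small if it lies in this set. *)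

(* Defs.v *)
From HB Require Import structures.
From mathcomp Require Import all_boot all_order all_algebra.
Set Implicit Arguments. Unset Strict Implicit. Unset Printing Implicit Defensive.
Import Order.TTheory GRing.Theory Num.Theory.
Local Open Scope ring_scope.

(* Weights in i t_{f,0}^* for k = so(2n,C): row vectors of coordinates
   w.r.t. the orthogonal basis e_1,...,e_n (indexed 0..n-1). *)
Definition ebasis (R : realFieldType) (n : nat) (i : 'I_n) : 'rV[R]_n :=
  delta_mx 0 i.

Definition sgnb (R : realFieldType) (b : bool) : R := if b then 1 else -1.

(* Delta(p,t_f) = { s (e_i + t e_j) : i<j, s,t in {+1,-1} } u { s 2 e_i }.
   R(Delta(p,t_f)) = { sum_alpha b_alpha alpha : 0 <= b_alpha <= 1 }. *)
Definition in_R_Delta_p (R : realFieldType) (n : nat) (mu : 'rV[R]_n) : Prop :=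
  exists (b1 : 'I_n -> 'I_n -> bool -> bool -> R) (b2 : 'I_n -> bool -> R),
    (forall i j s t, 0 <= b1 i j s t <= 1) /\
    (forall i s, 0 <= b2 i s <= 1) /\
    mu = \sum_(i < n) \sum_(j < n | (i < j)%N) \sum_(s : bool) \sum_(t : bool)
            b1 i j s t *: (sgnb R s *: (ebasis R i + sgnb R t *: ebasis R j))
         + \sum_(i < n) \sum_(s : bool) b2 i s *: (sgnb R s *: (2 *: ebasis R i)).

Definition u_small (R : realFieldType) (n : nat) (mu : 'rV[R]_n) : Prop :=
  in_R_Delta_p mu.

(* Main.v *)
Require Import Defs.
From HB Require Import structures.
From mathcomp Require Import all_boot all_order all_algebra.
From mathcomp Require Import ring lra zify.
Import Order.TTheory GRing.Theory Num.Theory.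
Local Open Scope ring_scope.
Definition rampR {R : realFieldType} (t : R) : R := if t <= 0 then 0 else t.
Definition clampR {R : realFieldType} (t : R) : R :=
  if t <= 0 then 0 else if t <= 2 then t else 2.
Lemma ramp_ge0 (R : realFieldType) (t : R) : 0 <= t -> rampR t = t.
Proof. rewrite /rampR; case: (lerP t 0) => h H; lra. Qed.
Lemma ramp_le0 (R : realFieldType) (t : R) : t <= 0 -> rampR t = 0.
Proof. by rewrite /rampR => ->. Qed.
Lemma clamp_ramp (R : realFieldType) (t : R) : clampR t = rampR t - rampR (t - 2).
Proof. rewrite /clampR /rampR; case: (lerP t 0) => ?; case: (lerP t 2) => ?; case: (lerP (t-2) 0) => ?; lra. Qed.

Lemma ivt (R : realFieldType) (l : seq (R * R)) (c s a b B : R) :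
  a <= b ->
  B <= c + s * a + \sum_(p <- l) p.1 * rampR (p.2 - a) ->
  c + s * b + \sum_(p <- l) p.1 * rampR (p.2 - b) <= B ->
  exists L, a <= L <= b /\ c + s * L + \sum_(p <- l) p.1 * rampR (p.2 - L) = B.
Proof.
elim: l c s a b => [|p l IH] c s a b hab ha hb.
  rewrite !big_nil !addr0 in ha hb *.
  case: (eqVneq s 0) => [s0|hs].
    exists a; rewrite big_nil addr0 s0 !mul0r in ha hb *; split; [apply/andP; split; lra | lra].
  have hsL : s * ((B - c) / s) = B - c by rewrite mulrC divfK.
  exists ((B - c) / s); rewrite big_nil addr0 hsL; split; last by ring.
  move: hsL; set L := (B - c) / s => hsL.
  case: (ltrgtP s 0) => hs'; last by move: hs; rewrite hs' eqxx.
    by apply/andP; split; nra.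
  by apply/andP; split; nra.
rewrite !big_cons in ha hb *.
set y := p.2 in ha hb *.
case: (lerP y a) => hya.
  have [L [hL hF]] : exists L, a <= L <= b /\ c + s * L + \sum_(p <- l) p.1 * rampR (p.2 - L) = B.
    apply: IH => //.
      by move: ha; rewrite (@ramp_le0 _ (y - a)) ?mulr0 ?add0r //; lra.
    by move: hb; rewrite (@ramp_le0 _ (y - b)) ?mulr0 ?add0r //; lra.
  exists L; rewrite big_cons; split => //; rewrite ramp_le0 ?mulr0 ?add0r //.
  by move/andP: hL => [? ?]; lra.
case: (lerP b y) => hyb.
  have [L [hL hF]] : exists L, a <= L <= b /\ (c + p.1 * y) + (s - p.1) * L + \sum_(p <- l) p.1 * rampR (p.2 - L) = B.
    apply: IH => //.
      by move: ha; rewrite (@ramp_ge0 _ (y - a)); [lra|lra].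
    by move: hb; rewrite (@ramp_ge0 _ (y - b)); [lra|lra].
  exists L; rewrite big_cons; split => //; move/andP: hL => [? ?].
  rewrite ramp_ge0; [lra|lra].
have hy0 : rampR (y - y) = 0 by rewrite subrr ramp_le0.
case: (lerP (c + s * y + (p.1 * rampR (y - y) + \sum_(p <- l) p.1 * rampR (p.2 - y))) B) => hFy.
  have [L [hL hF]] : exists L, a <= L <= y /\ (c + p.1 * y) + (s - p.1) * L + \sum_(p <- l) p.1 * rampR (p.2 - L) = B.
    apply: IH; first lra.
      by move: ha; rewrite (@ramp_ge0 _ (y - a)); [lra|lra].
    by move: hFy; rewrite hy0; lra.
  move/andP: hL => [? ?].
  exists L; rewrite big_cons; split; first by apply/andP; split; lra.
  rewrite ramp_ge0; [lra|lra].
have [L [hL hF]] : exists L, y <= L <= b /\ c + s * L + \sum_(p <- l) p.1 * rampR (p.2 - L) = B.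
  apply: IH; first lra.
    by move: hFy; rewrite hy0; lra.
  by move: hb; rewrite (@ramp_le0 _ (y - b)) ?mulr0 ?add0r //; lra.
move/andP: hL => [? ?].
exists L; rewrite big_cons; split; first by apply/andP; split; lra.
by rewrite ramp_le0 ?mulr0 ?add0r //; lra.
Qed.

Definition cR {R : realFieldType} (n k : nat) : R := 2 * n%:R * k%:R - k%:R ^+ 2 + k%:R.

Lemma cR_S1 (R : realFieldType) n k : (cR n.+1 k : R) = cR n k + 2 * k%:R.
Proof. rewrite /cR -natr1; ring. Qed.
Lemma cR_S2 (R : realFieldType) n k : (cR n.+1 k.+1 : R) = cR n k + 2 * n.+1%:R.
Proof. rewrite /cR -!natr1; ring. Qed.
Lemma cR_mono (R : realFieldType) n q k : (q <= k)%N -> (k <= n)%N -> (cR n q : R) <= cR n k.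
Proof.
move=> hqk hkn; rewrite /cR.
have h1 : (q%:R : R) <= k%:R by rewrite ler_nat.
have h2 : (k%:R : R) <= n%:R by rewrite ler_nat.
have h3 : (0 : R) <= q%:R by rewrite ler0n.
nra.
Qed.
Lemma cR_concave (R : realFieldType) n q k p : 
  ((p%:R - q%:R) * cR n k : R) = (p%:R - k%:R) * cR n q + (k%:R - q%:R) * cR n p
     + (p%:R - k%:R) * (k%:R - q%:R) * (p%:R - q%:R).
Proof. rewrite /cR; ring. Qed.

Lemma sum_const_nat (R : realFieldType) m k (c : R) : \sum_(m <= j < k) c = (k - m)%:R * c.
Proof. by rewrite sumr_const_nat mulrC mulr_natr. Qed.

Lemma prefix_pred (P : pred nat) n :
  (forall i j, (i <= j)%N -> (j < n)%N -> P j -> P i) ->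
  exists q, (q <= n)%N /\ forall j, (j < n)%N -> P j = (j < q)%N.
Proof.
elim: n => [|n IH] hP; first by exists 0%N; split => // j.
have [q [hq hQ]] : exists q, (q <= n)%N /\ forall j, (j < n)%N -> P j = (j < q)%N.
  by apply: IH => i j hij hjn; apply: hP => //; lia.
case hPn: (P n).
  exists n.+1; split => // j hj; rewrite hj; apply: (hP j n) => //; lia.
exists q; split; first lia.
move=> j hj; case: (ltngtP j n) => hjn.
- exact: hQ.
- lia.
- by rewrite hjn hPn; apply/esym/negbTE; rewrite -leqNgt.
Qed.

Lemma resid (R : realFieldType) (n : nat) (x : nat -> R) (b0 L : R) :
 (forall i j, (i <= j)%N -> (j < n)%N -> x j <= x i) ->
 (forall j, (j < n)%N -> 0 <= x j) -> 0 <= L ->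
 (forall k, (k <= n)%N -> \sum_(0 <= j < k) x j <= cR n.+1 k) ->
 (forall k, (k <= n)%N -> b0 + \sum_(0 <= j < k) x j <= cR n.+1 k.+1) ->
 (L = 0 \/ b0 + \sum_(0 <= j < n) clampR (x j - L) = 2 * n.+1%:R) ->
 forall k, (k <= n)%N -> \sum_(0 <= j < k) (x j - clampR (x j - L)) <= cR n k.
Proof.
move=> hs hx0 hL h1 h2 hb.
have [q [hq hQ]] := @prefix_pred (fun j => L + 2 <= x j) n
   (fun i j hij hjn hj => le_trans hj (hs i j hij hjn)).
have [p [hp hP]] := @prefix_pred (fun j => L < x j) n
   (fun i j hij hjn hj => lt_le_trans hj (hs i j hij hjn)).
have hqp : (q <= p)%N.
  rewrite leqNgt; apply/negP => hpq.
  have hpn : (p < n)%N by lia.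
  have := hQ p hpn; have := hP p hpn; rewrite hpq ltnn /= => /negbT.
  by rewrite -leNgt => hxp hxp2; move: hxp2 hxp; lra.
have fA : forall j, (j < n)%N -> (j < q)%N -> clampR (x j - L) = 2.
  move=> j hjn hjq; move: (hQ j hjn); rewrite hjq => hj.
  by rewrite /clampR; case: (lerP (x j - L) 0) => ?; case: (lerP (x j - L) 2) => ?; lra.
have fM : forall j, (j < n)%N -> (q <= j)%N -> (j < p)%N -> x j - clampR (x j - L) = L.
  move=> j hjn hqj hjp; move: (hQ j hjn) (hP j hjn).
  rewrite hjp (_ : (j < q)%N = false); last by lia.
  move=> /negbT; rewrite -ltNge => hj1 hj2.
  by rewrite /clampR; case: (lerP (x j - L) 0) => ?; case: (lerP (x j - L) 2) => ?; lra.
have fZ : forall j, (j < n)%N -> (p <= j)%N -> clampR (x j - L) = 0.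
  move=> j hjn hpj; move: (hP j hjn).
  rewrite (_ : (j < p)%N = false); last by lia.
  move=> /negbT; rewrite -leNgt => hj.
  by rewrite /clampR; case: (lerP (x j - L) 0) => ?; lra.
set T := fun k => \sum_(0 <= j < k) (x j - clampR (x j - L)).
have cA : forall k, (k <= q)%N -> T k <= cR n k.
  move=> k hk; rewrite /T (@eq_big_nat _ _ _ _ _ _ (fun j => x j - 2)); last first.
    by move=> j /andP [_ hj]; rewrite fA //; lia.
  rewrite sumrB sum_const_nat subn0.
  have := h1 k (leq_trans hk hq); rewrite cR_S1; lra.
have Tsplit : forall a c, (a <= c)%N -> T c = T a + \sum_(a <= j < c) (x j - clampR (x j - L)).
  by move=> a c hac; rewrite /T (@big_cat_nat _ _ _ a).
move=> k hk.
case: (leqP k q) => hkq; first exact: cA.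
case: hb => [L0|hb].
  have hTk : T k = T q.
    rewrite (Tsplit q k) ?(ltnW hkq) // big1_seq ?addr0 // => j; rewrite mem_index_iota => /andP [hqj hjk].
    have hjn : (j < n)%N by lia.
    move: (hQ j hjn); rewrite (_ : (j < q)%N = false); last by lia.
    move=> /negbT; rewrite -ltNge L0 add0r => hj; have := hx0 j hjn.
    by rewrite subr0 /clampR; case: (lerP (x j) 0) => ?; case: (lerP (x j) 2) => ?; lra.
  change (T k <= cR n k); rewrite hTk.
  exact: le_trans (cA q (leqnn q)) (@cR_mono R n q k (ltnW hkq) hk).
have cB : forall k, (p <= k)%N -> (k <= n)%N -> T k <= cR n k.
  move=> k' hpk hkn.
  have e : T k' = \sum_(0 <= j < k') x j - \sum_(0 <= j < n) clampR (x j - L).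
    rewrite /T sumrB (@big_cat_nat _ _ _ k' 0 n) //= [X in _ - (_ + X)]big1_seq ?addr0 //.
    by move=> j; rewrite mem_index_iota => /andP [? ?]; apply: fZ; lia.
  rewrite e; have := h2 k' hkn; rewrite cR_S2; lra.
case: (leqP p k) => hpk; first exact: cB.
have eTk : T k = T q + (k - q)%:R * L.
  rewrite (Tsplit q k) ?(ltnW hkq) // -sum_const_nat; congr (_ + _).
  by apply: eq_big_nat => j /andP [? ?]; apply: fM; lia.
have eTp : T p = T q + (p - q)%:R * L.
  rewrite (Tsplit q p) // -sum_const_nat; congr (_ + _).
  by apply: eq_big_nat => j /andP [? ?]; apply: fM; lia.
have hTq := cA q (leqnn q).
have hTp := cB p (leqnn p) hp.
have hc := cR_concave R n q k p.
rewrite !natrB ?(ltnW hkq) // in eTk eTp.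
have hqk : (q%:R : R) < k%:R by rewrite ltr_nat.
have hkp : (k%:R : R) < p%:R by rewrite ltr_nat.
change (T k <= cR n k).
move: hTq hTp hc eTk eTp; set a := T q; set tp := T p; set tk := T k; set Q := (q%:R : R); set K := (k%:R : R); set P := (p%:R : R).
move=> hTq hTp hc eTk eTp.
have hpos : 0 < P - Q by lra.
rewrite -(ler_pM2l hpos).
have e1 : (P - Q) * tk = (P - K) * a + (K - Q) * tp by rewrite eTk eTp; ring.
rewrite e1 hc.
have : (P - K) * a <= (P - K) * cR n q by apply: ler_wpM2l; lra.
have : (K - Q) * tp <= (K - Q) * cR n p by apply: ler_wpM2l; lra.
have : 0 <= (P - K) * (K - Q) * (P - Q) by apply: mulr_ge0; [apply: mulr_ge0|]; lra.
lra.
Qed.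

Definition G {R : realFieldType} (n : nat) (v : nat -> R) : Prop :=
 exists (X Y : nat -> nat -> R) (W : nat -> R),
 (forall i j, (i < j)%N -> (j < n)%N -> `|X i j| + `|Y i j| <= 2) /\
 (forall i, (i < n)%N -> `|W i| <= 2) /\
 (forall m, (m < n)%N -> v m = W m + \sum_(j < n | (m < j)%N) X m j + \sum_(j < n | (j < m)%N) Y j m).

Lemma shiftX (R : realFieldType) n (P : nat -> bool) (F : nat -> R) :
  \sum_(j < n.+1 | P j) F j = (if P 0%N then F 0%N else 0) + \sum_(j < n | P j.+1) F j.+1.
Proof.
rewrite big_mkcond big_ord_recl; congr (_ + _).
by rewrite [RHS]big_mkcond; apply: eq_bigr => i _; rewrite lift0.
Qed.

Lemma G_step (R : realFieldType) n (v : nat -> R) (r : nat -> R) :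
 (forall j, (j < n)%N -> 0 <= r j <= 2) ->
 0 <= v 0%N -> v 0%N + \sum_(0 <= j < n) r j <= 2 * n.+1%:R ->
 G n (fun j => v j.+1 - r j) -> G n.+1 v.
Proof.
move=> hr hv0 hbud [X [Y [W [hXY [hW hE]]]]].
set C := 2 + \sum_(0 <= j < n) (2 - r j).
have hC : C = 2 * n.+1%:R - \sum_(0 <= j < n) r j.
  by rewrite /C sumrB sum_const_nat subn0 -natr1; ring.
have hCv : v 0%N <= C by rewrite hC; lra.
have hs : 0 <= \sum_(0 <= j < n) (2 - r j).
  rewrite big_seq; apply: sumr_ge0 => j; rewrite mem_index_iota => /andP [_ hj].
  by have := hr j hj => /andP [_ ?]; lra.
have hC0 : 0 < C by rewrite /C; lra.
exists (fun i j => if i is i'.+1 then X i' j.-1 else v 0%N * (2 - r j.-1) / C).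
exists (fun i j => if i is i'.+1 then Y i' j.-1 else r j.-1).
exists (fun i => if i is i'.+1 then W i' else 2 * v 0%N / C).
split; [|split].
- move=> [|i] [|j] //= hij hjn.
    have := hr j hjn => /andP [hr0 hr2].
    rewrite (ger0_norm hr0) ger0_norm; last by apply: divr_ge0; [apply: mulr_ge0|]; lra.
    have : v 0%N * (2 - r j) / C <= 2 - r j.
      by rewrite ler_pdivrMr //; nra.
    lra.
  by apply: hXY.
- move=> [|i] /= hi; last by apply: hW.
  rewrite ger0_norm; last by apply: divr_ge0; lra.
  by rewrite ler_pdivrMr //; lra.
move=> [|m] hm /=.
  rewrite (@shiftX R n (fun j => 0 < j)%N (fun j => v 0%N * (2 - r j.-1) / C)) /= add0r.
  rewrite [X in _ = _ + _ + X]big1 ?addr0 //.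
  rewrite -mulr_suml -mulr_sumr; under eq_bigl => i do rewrite ltn0Sn; rewrite -(@big_mkord _ 0 +%R n xpredT (fun i => 2 - r i)).
  have -> : 2 * v 0%N / C + v 0%N * (\sum_(0 <= i < n) (2 - r i)) / C = v 0%N * C / C.
    by rewrite /C; ring.
  by rewrite mulfK //; apply/eqP => h; move: hC0; rewrite h ltxx.
rewrite (@shiftX R n (fun j => m.+1 < j)%N (fun j => if m.+1 is i'.+1 then X i' j.-1 else 0)).
rewrite (@shiftX R n (fun j => j < m.+1)%N (fun j => if j is i'.+1 then Y i' m else r m)) /= add0r.
have hEm := hE m hm.
have -> : \sum_(j < n | (m.+1 < j.+1)%N) X m j = \sum_(j < n | (m < j)%N) X m j by [].
have -> : \sum_(j < n | (j.+1 < m.+1)%N) Y j m = \sum_(j < n | (j < m)%N) Y j m by [].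
lra.
Qed.


Lemma clamp_bnd (R : realFieldType) (t : R) : 0 <= clampR t <= 2.
Proof. by rewrite /clampR; case: (lerP t 0) => ?; case: (lerP t 2) => ?; apply/andP; split; lra. Qed.
Lemma resid_mono (R : realFieldType) (L x y : R) : x <= y -> x - clampR (x - L) <= y - clampR (y - L).
Proof.
by move=> h; rewrite /clampR; case: (lerP (x - L) 0) => ?; case: (lerP (x - L) 2) => ?;
  case: (lerP (y - L) 0) => ?; case: (lerP (y - L) 2) => ?; lra.
Qed.
Lemma resid_ge0 (R : realFieldType) (L x : R) : 0 <= x -> 0 <= L -> 0 <= x - clampR (x - L).
Proof. by move=> h1 h2; rewrite /clampR; case: (lerP (x - L) 0) => ?; case: (lerP (x - L) 2) => ?; lra. Qed.
Lemma clamp_le0 (R : realFieldType) (t : R) : t <= 0 -> clampR t = 0.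
Proof. by rewrite /clampR => ->. Qed.

Lemma suff_core (R : realFieldType) n : forall b : nat -> R,
 (forall i j, (i <= j)%N -> (j < n)%N -> b j <= b i) ->
 (forall i, (i < n)%N -> 0 <= b i) ->
 (forall k, (k <= n)%N -> \sum_(0 <= i < k) b i <= cR n k) -> G n b.
Proof.
elim: n => [|n IH] b hs h0 hp.
  by exists (fun _ _ => 0), (fun _ _ => 0), (fun _ => 0); split => //.
set b0 := b 0%N; set x := fun j => b j.+1.
have hb0 : b0 <= 2 * n.+1%:R.
  have e : (cR n.+1 1 : R) = 2 * n.+1%:R by rewrite /cR; ring.
  by have := hp 1%N isT; rewrite big_nat1 e.
have hb00 : 0 <= b0 := h0 0%N isT.
have hxs : forall i j, (i <= j)%N -> (j < n)%N -> x j <= x i.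
  by move=> i j hij hjn; apply: hs.
have hx0 : forall j, (j < n)%N -> 0 <= x j by move=> j hj; apply: h0.
have hxb : forall j, (j < n)%N -> x j <= b0 by move=> j hj; apply: hs.
set F := fun L => \sum_(0 <= j < n) clampR (x j - L).
set B := 2 * n.+1%:R - b0.
have [L [hL0 hLb]] : exists L, 0 <= L /\ (L = 0 /\ F L <= B \/ F L = B).
  case: (lerP (F 0) B) => hF0; first by exists 0; split => //; left.
  pose lst := flatten [seq [:: ((1:R), x j); ((-1:R), x j - 2)] | j <- index_iota 0 n].
  have eF : forall L, F L = 0 + 0 * L + \sum_(p <- lst) p.1 * rampR (p.2 - L).
    move=> L; rewrite mul0r !add0r big_flatten big_map /F.
    apply: eq_bigr => j _; rewrite !big_cons big_nil clamp_ramp.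
    by rewrite (_ : x j - 2 - L = x j - L - 2) /=; [ring | ring].
  have hF0' : B <= 0 + 0 * 0 + \sum_(p <- lst) p.1 * rampR (p.2 - 0) by rewrite -eF; exact: ltW.
  have hFb : 0 + 0 * b0 + \sum_(p <- lst) p.1 * rampR (p.2 - b0) <= B.
    rewrite -eF /F big1_seq; first by rewrite /B; lra.
    move=> j; rewrite mem_index_iota => /andP [_ hj]; apply: clamp_le0.
    by have := hxb j hj; lra.
  have [L [hL hFL]] := @ivt R lst 0 0 0 b0 B hb00 hF0' hFb.
  by exists L; move/andP: hL => [hL1 _]; split; [exact: hL1 | right; rewrite eF].
set r := fun j => clampR (x j - L).
apply: (@G_step R n b r).
- by move=> j _; apply: clamp_bnd.
- exact: hb00.
- by case: hLb => [[_ h]|h]; rewrite -/(F L) -/b0; move: h; rewrite /B; lra.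
apply: IH.
- by move=> i j hij hjn; apply: resid_mono; apply: hxs.
- by move=> i hi; apply: resid_ge0 => //; apply: hx0.
have h1 : forall k, (k <= n)%N -> \sum_(0 <= j < k) x j <= cR n.+1 k.
  move=> k hk; apply: le_trans (hp k (leqW hk)).
  by apply: ler_sum_nat => i /andP [_ hi]; apply: hs; lia.
have h2 : forall k, (k <= n)%N -> b0 + \sum_(0 <= j < k) x j <= cR n.+1 k.+1.
  by move=> k hk; have := hp k.+1 hk; rewrite big_nat_recl.
have := @resid R n x b0 L hxs hx0 hL0 h1 h2.
case: hLb => [[L0 _]|hFL] => hres.
  by apply: hres; left.
by apply: hres; right; rewrite -/(F L) hFL /B; ring.
Qed.


Definition posR {R : realFieldType} (z : R) : R := if 0 <= z then z else 0.
Lemma posE {R : realFieldType} (z : R) : posR z = z + posR (- z).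
Proof. rewrite /posR; case: (lerP 0 z) => ?; case: (lerP 0 (-z)) => ?; lra. Qed.
Lemma posR_bnd {R : realFieldType} (z : R) : -1 <= z <= 1 -> 0 <= posR z <= 1.
Proof. move=> /andP [? ?]; rewrite /posR; case: (lerP 0 z) => ?; apply/andP; split; lra. Qed.
Lemma abs_bnd {R : realFieldType} (x : R) : - `|x| <= x /\ x <= `|x|.
Proof. by split; [have := ler_norm (- x); rewrite normrN; lra | exact: ler_norm]. Qed.

Lemma pair_vec (R : realFieldType) n (i j : 'I_n) (x y : R) :
  \sum_(s : bool) \sum_(t : bool)
     (if t then (if s then posR ((x + y) / 2) else posR (- ((x + y) / 2)))
           else (if s then posR ((x - y) / 2) else posR (- ((x - y) / 2))))
     *: (sgnb R s *: (ebasis R i + sgnb R t *: ebasis R j))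
  = x *: ebasis R i + y *: ebasis R j.
Proof.
rewrite !big_bool /sgnb /=; apply/rowP => k; rewrite !mxE.
rewrite (posE ((x + y) / 2)) (posE ((x - y) / 2)); move: (k == i)%:R (k == j)%:R => a c; by field.
Qed.

Lemma single_vec (R : realFieldType) n (i : 'I_n) (w : R) :
  \sum_(s : bool) (if s then posR (w / 2) else posR (- (w / 2))) *: (sgnb R s *: (2 *: ebasis R i))
  = w *: ebasis R i.
Proof.
rewrite !big_bool /sgnb /=; apply/rowP => k; rewrite !mxE.
rewrite (posE (w / 2)); by field.
Qed.

Lemma bridge (R : realFieldType) n (mu : 'rV[R]_n) (v : nat -> R) :
  G n v -> (forall m : 'I_n, mu 0 m = v m) -> in_R_Delta_p mu.
Proof.
move=> [X [Y [W [hXY [hW hE]]]]] hmu.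
exists (fun i j s t => if (i < j)%N then
     (if t then (if s then posR ((X i j + Y i j) / 2) else posR (- ((X i j + Y i j) / 2)))
           else (if s then posR ((X i j - Y i j) / 2) else posR (- ((X i j - Y i j) / 2)))) else 0).
exists (fun i s => if s then posR (W i / 2) else posR (- (W i / 2))).
split; [|split].
- move=> i j s t; case: ifP => hij; last by rewrite lexx ler01.
  have := hXY i j hij (ltn_ord j).
  have [? ?] := abs_bnd (X i j); have [? ?] := abs_bnd (Y i j) => h.
  by case: s; case: t; apply: posR_bnd; apply/andP; split; lra.
- move=> i s; have := hW i (ltn_ord i); have [? ?] := abs_bnd (W i) => h.
  by case: s; apply: posR_bnd; apply/andP; split; lra.
rewrite (eq_bigr (fun i : 'I_n => \sum_(j < n | (i < j)%N) (X i j *: ebasis R i + Y i j *: ebasis R j))); last first.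
  move=> i _; apply: eq_bigr => j hij; rewrite -pair_vec; apply: eq_bigr => s _; apply: eq_bigr => t _.
  by rewrite hij.
rewrite [X in _ = _ + X](eq_bigr (fun i : 'I_n => W i *: ebasis R i)); last by move=> i _; exact: single_vec.
apply/rowP => k; rewrite !mxE !summxE.
under eq_bigr => i _ do rewrite summxE.
under eq_bigr => i _ do under eq_bigr => j _ do rewrite !mxE.
under [X in _ = _ + X]eq_bigr => i _ do rewrite !mxE.
rewrite hmu hE //.
under eq_bigr => i _ do rewrite big_split /=.
rewrite big_split /=.
have eX : \sum_(i < n) \sum_(j < n | (i < j)%N) X i j * (k == i)%:R
          = \sum_(j < n | (k < j)%N) X k j.
  rewrite [LHS](bigD1 k) //= [X in _ + X]big1 ?addr0.
    by apply: eq_bigr => j _; rewrite eqxx mulr1.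
  by move=> i hik; apply: big1 => j _; rewrite eq_sym (negbTE hik) mulr0.
have eY : \sum_(i < n) \sum_(j < n | (i < j)%N) Y i j * (k == j)%:R
          = \sum_(j < n | (j < k)%N) Y j k.
  rewrite [RHS]big_mkcond; apply: eq_bigr => i _.
  rewrite big_mkcond [LHS](bigD1 k) //= [X in _ + X]big1 ?addr0.
    by case: ifP; rewrite ?eqxx ?mulr1.
  by move=> j hjk; case: ifP => //; rewrite eq_sym (negbTE hjk) mulr0.
have eW : \sum_(i < n) W i * (k == i)%:R = W k.
  rewrite [LHS](bigD1 k) //= [X in _ + X]big1 ?addr0 ?eqxx ?mulr1 // => i hik.
  by rewrite eq_sym (negbTE hik) mulr0.
rewrite eX eY eW; ring.
Qed.


Lemma G_flip (R : realFieldType) n (v : nat -> R) m0 :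
  G n v -> G n (fun m => if m == m0 then - v m else v m).
Proof.
move=> [X [Y [W [hXY [hW hE]]]]].
exists (fun i j => if i == m0 then - X i j else X i j).
exists (fun i j => if j == m0 then - Y i j else Y i j).
exists (fun i => if i == m0 then - W i else W i).
split; [|split].
- by move=> i j hij hjn; case: (i == m0); case: (j == m0); rewrite ?normrN; apply: hXY.
- by move=> i hi; case: (i == m0); rewrite ?normrN; apply: hW.
move=> m hm; case: (eqVneq m m0) => [e|hne].
  by subst m0; rewrite (hE m hm) !sumrN; ring.
exact: hE.
Qed.

Lemma diff_bnd {R : realFieldType} {bp bm : R} (z : R) :
  0 <= bp <= 1 -> 0 <= bm <= 1 -> bp * z + bm * (- z) <= `|z|.
Proof.
move=> /andP [? ?] /andP [? ?].
case: (lerP 0 z) => hz; [rewrite ger0_norm // | rewrite ltr0_norm //]; nra.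
Qed.

Lemma nec (R : realFieldType) n (mu : 'rV[R]_n) (f g : 'I_n -> R) :
 (forall i j : 'I_n, (i < j)%N -> `|f i + f j| + `|f i - f j| <= 2 * g i) ->
 (forall i, `|f i| <= g i) ->
 in_R_Delta_p mu -> \sum_(m < n) f m * mu 0 m <= \sum_(i < n) 2 * g i * (n - i)%:R.
Proof.
move=> hfg hf [b1 [b2 [hb1 [hb2 ->]]]].
pose phi := fun v : 'rV[R]_n => \sum_(m < n) f m * v 0 m.
have phiD : {morph phi : u w / u + w}.
  by move=> u w; rewrite /phi -big_split; apply: eq_bigr => m _; rewrite mxE mulrDr.
have phi0 : phi 0 = 0 by rewrite /phi big1 // => m _; rewrite mxE mulr0.
have phiZ : forall a u, phi (a *: u) = a * phi u.
  by move=> a u; rewrite /phi mulr_sumr; apply: eq_bigr => m _; rewrite mxE; ring.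
have phie : forall i, phi (ebasis R i) = f i.
  move=> i; rewrite /phi (bigD1 i) //= big1 ?addr0.
    by rewrite /ebasis mxE !eqxx mulr1.
  by move=> m hm; rewrite /ebasis mxE eqxx /= (negbTE hm) mulr0.
have phiS : forall (I : Type) (r : seq I) (P : pred I) (F : I -> 'rV[R]_n),
    phi (\sum_(i <- r | P i) F i) = \sum_(i <- r | P i) phi (F i).
  by move=> I r P F; apply: (big_morph phi phiD phi0).
change (phi (\sum_(i < n) \sum_(j < n | (i < j)%N) \sum_(s : bool) \sum_(t : bool)
            b1 i j s t *: (sgnb R s *: (ebasis R i + sgnb R t *: ebasis R j))
         + \sum_(i < n) \sum_(s : bool) b2 i s *: (sgnb R s *: (2 *: ebasis R i)))
        <= \sum_(i < n) 2 * g i * (n - i)%:R).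
rewrite phiD !phiS.
have hC : forall i j : 'I_n, (i < j)%N ->
   phi (\sum_(s : bool) \sum_(t : bool) b1 i j s t *: (sgnb R s *: (ebasis R i + sgnb R t *: ebasis R j)))
   <= 2 * g i.
  move=> i j hij; apply: le_trans (hfg i j hij).
  rewrite !big_bool /= !phiD !phiZ !phiD !phiZ !phie /sgnb.
  have h1 := diff_bnd (f i + f j) (hb1 i j true true) (hb1 i j false true).
  have h2 := diff_bnd (f i - f j) (hb1 i j true false) (hb1 i j false false).
  move: h1 h2; set a := b1 i j true true; set b := b1 i j false true;
    set c := b1 i j true false; set d := b1 i j false false.
  move=> h1 h2.
  have e : a * (1 * (f i + 1 * f j)) + c * (1 * (f i + -1 * f j)) +
    (b * (-1 * (f i + 1 * f j)) + d * (-1 * (f i + -1 * f j)))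
    = (a * (f i + f j) + b * - (f i + f j)) + (c * (f i - f j) + d * - (f i - f j)) by ring.
  rewrite e; lra.
have hS : forall i : 'I_n,
   phi (\sum_(s : bool) b2 i s *: (sgnb R s *: (2 *: ebasis R i))) <= 2 * g i.
  move=> i; rewrite !big_bool /= !phiD (phiZ (b2 i true)) (phiZ (b2 i false)) (phiZ 1) (phiZ (-1)) !(phiZ 2) !phie.
  have h1 := diff_bnd (2 * f i) (hb2 i true) (hb2 i false).
  have h2 := hf i.
  have e2 : `|2 * f i| = 2 * `|f i| by rewrite normrM ger0_norm.
  move: h1; rewrite e2 => h1.
  have e : b2 i true * (1 * (2 * f i)) + b2 i false * (-1 * (2 * f i)) =
     b2 i true * (2 * f i) + b2 i false * - (2 * f i) by ring.
  rewrite e; lra.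
have hA : forall i : 'I_n,
   \sum_(j < n | (i < j)%N) phi (\sum_(s : bool) \sum_(t : bool)
        b1 i j s t *: (sgnb R s *: (ebasis R i + sgnb R t *: ebasis R j)))
   <= 2 * g i * (n - i.+1)%:R.
  move=> i; apply: le_trans (ler_sum _ (fun j hij => hC i j hij)) _.
  have -> : \sum_(j < n | (i < j)%N) 2 * g i = \sum_(i.+1 <= j < n) 2 * g i.
    by rewrite big_geq_mkord.
  by rewrite sum_const_nat mulrC.
apply: (@le_trans _ _ (\sum_(i < n) 2 * g i * (n - i.+1)%:R + \sum_(i < n) 2 * g i)).
  apply: lerD; apply: ler_sum => i _; [rewrite phiS; exact: hA | exact: hS].
rewrite -big_split; apply: ler_sum => i _ /=.
have e : (n - i = (n - i.+1).+1)%N by have := ltn_ord i; lia.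
rewrite e -(@natr1 R (n - i.+1)).
have -> : 2 * g i * ((n - i.+1)%:R + 1) = 2 * g i * (n - i.+1)%:R + 2 * g i by ring.
by [].
Qed.


Lemma count_sum n k : (k <= n)%N -> (\sum_(i < k) (2 * (n - i)))%N = (2 * n * k - k ^ 2 + k)%N.
Proof.
elim: k => [|k IH] hk; first by rewrite big_ord0 muln0.
rewrite big_ord_recr /= (IH (ltnW hk)).
rewrite !expnS !expn0 !muln1. nia.
Qed.

Lemma cR_nat (R : realFieldType) n k : (k <= n)%N -> (cR n k : R) = ((2 * n * k - k ^ 2 + k)%N)%:R.
Proof.
move=> hk; rewrite natrD natrB; last by rewrite !expnS expn0 muln1; nia.
rewrite !natrM /cR; ring.
Qed.

Lemma sum_split_last (R : realFieldType) n (F : 'I_n.+1 -> R) :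
  \sum_(i < n.+1) F i = \sum_(i < n.+1 | (i < n)%N) F i + F ord_max.
Proof.
rewrite (bigD1 ord_max) //= addrC; congr (_ + _); apply: eq_bigl => i.
rewrite -(inj_eq val_inj) /=; have h := ltn_ord i; by apply/idP/idP => H; lia.
Qed.

Lemma suff_main (R : realFieldType) n (mu : 'rV[R]_n.+1) :
 (forall i j : 'I_n.+1, (i <= j)%N -> (j < n)%N -> mu 0 j <= mu 0 i) ->
 (forall i j : 'I_n.+1, (i < j)%N -> nat_of_ord j = n -> `|mu 0 j| <= mu 0 i) ->
 (forall k, (1 <= k <= n.+1)%N ->
    \sum_(i < n.+1 | (i < k)%N) mu 0 i <= ((2 * n.+1 * k - k ^ 2 + k)%N)%:R) ->
 \sum_(i < n.+1) (if (i < n)%N then mu 0 i else - mu 0 i) <= ((n.+1 ^ 2 + n.+1)%N)%:R ->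
 in_R_Delta_p mu.
Proof.
move=> hdom hlast hK htw.
pose b := fun m : nat => if m == n then `|mu 0 (inord m)| else mu 0 (inord m).
have hsort : forall i j, (i <= j)%N -> (j < n.+1)%N -> b j <= b i.
  move=> i j hij hjn; rewrite /b.
  case: (eqVneq j n) => [ej|nej].
    case: (eqVneq i n) => [ei|nei]; first by rewrite ei ej.
    apply: hlast; rewrite ?inordK //; lia.
  have hin : (i == n) = false by apply/negbTE; lia.
  by rewrite hin; apply: hdom; rewrite ?inordK //; lia.
have hb0 : forall i, (i < n.+1)%N -> 0 <= b i.
  move=> i hi; have hin : (i <= n)%N by lia.
  apply: le_trans (hsort i n hin (ltnSn n)).
  by rewrite /b eqxx normr_ge0.
have hpre : forall k, (k <= n)%N -> \sum_(0 <= i < k) b i = \sum_(i < n.+1 | (i < k)%N) mu 0 i.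
  move=> k hkn; rewrite big_mkord (big_ord_widen n.+1 b); last by lia.
  apply: eq_bigr => i hik; rewrite /b (_ : (i == n :> nat) = false); last by apply/negbTE; lia.
  by rewrite inord_val.
have hcR : (cR n.+1 n.+1 : R) = ((n.+1 ^ 2 + n.+1)%N)%:R.
  by rewrite cR_nat //; congr (_%:R); rewrite !expnS expn0 !muln1; nia.
set x := mu 0 ord_max.
have hx : mu 0 (inord n) = x by congr (mu 0 _); apply: val_inj; rewrite /= inordK.
have hG : G n.+1 b.
  apply: suff_core => //.
  move=> k hk; case: (eqVneq k 0%N) => [->|k0].
    have -> : (cR n.+1 0 : R) = 0 by rewrite /cR; ring.
    by rewrite big_geq.
  case: (leqP k n) => hkn.
    rewrite hpre // cR_nat; last by lia.
    by apply: hK; lia.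
  have -> : k = n.+1 by lia.
  rewrite big_nat_recr //= hpre // /b eqxx hx.
  have hfull := hK n.+1 (leqnn _).
  rewrite (eq_bigl xpredT) in hfull; last by move=> i; rewrite ltn_ord.
  rewrite sum_split_last -/x in hfull.
  rewrite sum_split_last ltnn -/x in htw.
  rewrite (eq_bigr (fun i => mu 0 i)) in htw; last by move=> i ->.
  rewrite hcR; rewrite -cR_nat // hcR in hfull.
  case: (lerP 0 x) => hx0; [rewrite ger0_norm // | rewrite ltr0_norm //]; lra.
set v := fun m : nat => if 0 <= x then b m else (if m == n then - b m else b m).
have hGv : G n.+1 v.
  rewrite /v; case: (lerP 0 x) => _ //.
  exact: G_flip.
apply: (@bridge R n.+1 mu v hGv) => m; rewrite /v /b inord_val.
case: (eqVneq (m : nat) n) => [em|nem].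
  have -> : m = ord_max by apply: val_inj.
  rewrite -/x; case: (lerP 0 x) => hx0; [rewrite ger0_norm // | rewrite ltr0_norm //].
  by rewrite opprK.
by case: (lerP 0 x).
Qed.


Lemma abs2 {R : realFieldType} (a b c : R) : `|a| <= c -> `|b| <= c -> `|a + b| + `|a - b| <= 2 * c.
Proof.
move=> ha hb; have [? ?] := abs_bnd a; have [? ?] := abs_bnd b.
case: (lerP 0 (a + b)) => h1; [rewrite (ger0_norm h1) | rewrite (ltr0_norm h1)];
case: (lerP 0 (a - b)) => h2; [rewrite (ger0_norm h2) | rewrite (ltr0_norm h2) | rewrite (ger0_norm h2) | rewrite (ltr0_norm h2)]; lra.
Qed.

Lemma sum_pref (R : realFieldType) n k : (k <= n)%N ->
  \sum_(i < n) 2 * (i < k)%:R * (n - i)%:R = ((2 * n * k - k ^ 2 + k)%N)%:R :> R.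
Proof.
move=> hkn; rewrite -count_sum // natr_sum.
rewrite (big_ord_widen n (fun i => (2 * (n - i))%N%:R) hkn).
rewrite [RHS]big_mkcond; apply: eq_bigr => i _; case: ifP => _; rewrite ?mulr1 ?mulr0 ?mul0r //.
by rewrite natrM.
Qed.

Theorem mainTheorem10 (R : realFieldType) (n : nat) (mu : 'rV[R]_n) :
  (2 <= n)%N ->
  (* dominance: a_1 >= ... >= a_{n-1} >= |a_n| *)
  (forall i j : 'I_n, (i <= j)%N -> (j < n.-1)%N -> mu 0 j <= mu 0 i) ->
  (forall i j : 'I_n, (i < j)%N -> nat_of_ord j = n.-1 -> `|mu 0 j| <= mu 0 i) ->
  (* all a_i in Z, or all a_i in Z + 1/2 *)
  ((exists z : 'I_n -> int, forall i, mu 0 i = (z i)%:~R) \/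
   (exists z : 'I_n -> int, forall i, mu 0 i = (z i)%:~R + 2^-1)) ->
  (in_R_Delta_p mu <->
     ((forall k : nat, (1 <= k <= n)%N ->
         \sum_(i < n | (i < k)%N) mu 0 i <= ((2 * n * k - k ^ 2 + k)%N)%:R) /\
      \sum_(i < n) (if (i < n.-1)%N then mu 0 i else - mu 0 i)
         <= ((n ^ 2 + n)%N)%:R))
  /\
  ((forall i : 'I_n, nat_of_ord i = 0%N -> mu 0 i <= (n.+1)%:R) -> u_small mu).
Proof.
case: n mu => [|n] mu hn hdom hlast _ //=.
simpl in hdom, hlast.
split; first split.
- move=> hR; split.
  + move=> k /andP [hk1 hkn].
    have hfgA : forall i j : 'I_n.+1, (i < j)%N ->
        `|(i < k)%:R + (j < k)%:R| + `|(i < k)%:R - (j < k)%:R| <= 2 * ((i < k)%:R : R).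
      move=> i j hij; apply: abs2; rewrite ger0_norm ?ler0n //.
      by case hj: (j < k)%N; rewrite ?ler0n // (_ : (i < k)%N = true) //; lia.
    have hfA : forall i : 'I_n.+1, `|((i < k)%:R : R)| <= (i < k)%:R.
      by move=> i; rewrite ger0_norm ?ler0n.
    have h := @nec R n.+1 mu (fun i => (i < k)%:R) (fun i => (i < k)%:R) hfgA hfA hR.
    rewrite (@sum_pref R n.+1 k hkn) in h; apply: (le_trans _ h).
    rewrite le_eqVlt; apply/orP; left; apply/eqP.
    by rewrite [LHS]big_mkcond; apply: eq_bigr => i _; case: (i < k)%N; rewrite ?mul1r ?mul0r.
  + have hfgB : forall i j : 'I_n.+1, (i < j)%N ->
        `|(if (i < n)%N then 1 else -1) + (if (j < n)%N then 1 else -1)|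
        + `|(if (i < n)%N then 1 else -1) - (if (j < n)%N then 1 else -1)| <= 2 * (1 : R).
      by move=> i j _; apply: abs2; case: ifP => _; rewrite ?normrN normr1.
    have hfB : forall i : 'I_n.+1, `|(if (i < n)%N then 1 else -1)| <= (1 : R).
      by move=> i; case: ifP => _; rewrite ?normrN normr1.
    have h := @nec R n.+1 mu _ (fun _ => 1) hfgB hfB hR.
    apply: (le_trans (le_trans _ h)).
      rewrite le_eqVlt; apply/orP; left; apply/eqP.
      by apply: eq_bigr => i _; case: ifP => _; ring.
    have -> : \sum_(i < n.+1) 2 * 1 * (n.+1 - i)%:R = ((2 * n.+1 * n.+1 - n.+1 ^ 2 + n.+1)%N)%:R :> R.
      rewrite -count_sum // natr_sum; apply: eq_bigr => i _; rewrite natrM; ring.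
    rewrite le_eqVlt; apply/orP; left; apply/eqP; congr (_%:R).
    rewrite !expnS expn0 !muln1; nia.
- move=> [h1 h2]; exact: suff_main.
move=> h0; rewrite /u_small.
have hm0 := h0 ord0 erefl.
have hmax : forall i : 'I_n.+1, mu 0 i <= mu 0 ord0 /\ ((i : nat) = n -> - mu 0 i <= mu 0 ord0).
  move=> i; case: (ltnP i n) => hi.
    split; last by move=> e; move: hi; rewrite e ltnn.
    by apply: hdom => //.
  have ei : i = ord_max by apply: val_inj => /=; have := ltn_ord i; lia.
  have hl := hlast ord0 ord_max hn erefl.
  rewrite ei; have [? ?] := abs_bnd (mu 0 ord_max); split => [|_]; lra.
apply: suff_main => //.
- move=> k /andP [hk1 hkn].
  apply: (@le_trans _ _ (\sum_(i < n.+1 | (i < k)%N) mu 0 ord0)).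
    by apply: ler_sum => i _; case: (hmax i).
  rewrite -(big_ord_widen n.+1 (fun _ => mu 0 ord0) hkn) sumr_const card_ord -[mu 0 ord0 *+ k]mulr_natl.
  apply: (@le_trans _ _ (k%:R * n.+2%:R)).
    by apply: ler_wpM2l => //; rewrite ler0n.
  by rewrite -natrM ler_nat; rewrite !expnS expn0 !muln1; nia.
apply: (@le_trans _ _ (\sum_(i < n.+1) mu 0 ord0)).
  apply: ler_sum => i _; case: ifP => hi; first by case: (hmax i).
  by case: (hmax i) => _ ->; have := ltn_ord i; lia.
rewrite sumr_const card_ord -[mu 0 ord0 *+ n.+1]mulr_natl.
apply: (@le_trans _ _ (n.+1%:R * n.+2%:R)).
  by apply: ler_wpM2l => //; rewrite ler0n.
by rewrite -natrM ler_nat; rewrite !expnS expn0 !muln1; nia.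
Qed.
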